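(* For the anonymous MIS algorithm described in the context, let $\mathcal{X}$ be an alive connected candidate set of a configuration $\gamma$, and let $t$ be a valid set of moves in $\gamma$ consisting only of Withdrawal? moves on nodes of $\mathcal{X}$. Let $\gamma'$ be the random configuration obtained by executing $t$ from $\gamma$. Then, conditioned on the event that $\mathcal{X}$ vanishes in the transition $\gamma\xrightarrow{t}\gamma'$ (assumed to have positive probability), the probability that $\beta(\gamma')\setminus\beta(\gamma)\neq\emptyset$ is at least $\frac23$.
   Context: $G=(V,E)$ is a finite simple undirected graph; $N(u)$ is the open neighbourhood of $u$. A configuration assigns to each node $u$ a value $s_u\in\{\bot,\top\}$ (written $s_u^\gamma$ in configuration $\gamma$). A rule ''guard $\to$ command'' is enabled on $u$ in $\gamma$ if its guard holds there. A set $t$ of moves $(u,r)$ is valid in $\gamma$ if it is nonempty, each $r$ is enabled on $u$ in $\gamma$, and no node appears in two moves; executing $t$ from $\gamma$ means all nodes of $t$ execute their commands simultaneously from the values in $\gamma$, with independent random choices, the other nodes keeping their values. The algorithm has the rules: (Candidacy) $s_u=\bot\wedge\forall v\in N(u),\ s_v=\bot\ \to\ s_u:=\top$. (Withdrawal?) $s_u=\top\wedge\exists v\in N(u),\ s_v=\top\ \to$ with probability $\frac12$ (independently) set $s_u:=\bot$, otherwise leave it unchanged. $\beta(\gamma)=\{u\in V: s_u^\gamma=\top\text{ and }\forall v\in N(u),\ s_v^\gamma=\bot\}$. A set $\mathcal{X}\subseteq V$ is a candidate set of $\gamma$ if every $u\in\mathcal{X}$ has $s_u^\gamma=\top$ and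 every $v\in N(u)$ with $s_v^\gamma=\top$ belongs to $\mathcal{X}$; it is a connected candidate set if moreover it induces a connected subgraph of $G$. A candidate set $\mathcal{X}$ of $\gamma$ is alive in $\gamma$ if Withdrawal? is enabled on at least one node of $\mathcal{X}$ (for connected candidate sets this is equivalent to $|\mathcal{X}|\ge 2$). In a transition $\gamma\to\gamma'$, an alive candidate set $\mathcal{X}$ of $\gamma$ vanishes if every $u\in\mathcal{X}$ satisfies $s_u^{\gamma'}=\bot$ or $u\in\beta(\gamma')$. *)

(* Defs.v *)
From HB Require Import structures.
From mathcomp Require Import all_boot all_order all_algebra.
Set Implicit Arguments. Unset Strict Implicit. Unset Printing Implicit Defensive.
Import Order.TTheory GRing.Theory Num.Theory.

(* A graph: T : finType with a symmetric irreflexive adjacency relation e.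
   A configuration is s : T -> bool, with true = top, false = bot. *)

Definition simple_graph (T : finType) (e : rel T) : Prop :=
  symmetric e /\ irreflexive e.

Inductive rule := Candidacy | Withdrawal.
Definition rule_to_bool (r : rule) : bool :=
  match r with Candidacy => true | Withdrawal => false end.
Definition bool_to_rule (b : bool) : rule := if b then Candidacy else Withdrawal.
Lemma rule_to_boolK : cancel rule_to_bool bool_to_rule. Proof. by case. Qed.
HB.instance Definition _ := Finite.copy rule (can_type rule_to_boolK).

Section Alg.
Variables (T : finType) (e : rel T).

Definition enabled (s : T -> bool) (u : T) (r : rule) : bool :=
  match r with
  | Candidacy => ~~ s u && [forall v, e u v ==> ~~ s v]
  | Withdrawal => s u && [exists v, e u v && s v]
  end.

Definition valid_moves (s : T -> bool) (t : {set T * rule}) : bool :=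
  [&& t != set0,
      [forall m in t, enabled s m.1 m.2] &
      [forall m1 in t, forall m2 in t, (m1.1 == m2.1) ==> (m1 == m2)]].

Definition withdrawing_nodes (t : {set T * rule}) : {set T} :=
  [set u | (u, Withdrawal) \in t].

(* Result of executing t from s when the set of withdrawing nodes that
   actually switch to bot (random choice) is W. *)
Definition exec (s : T -> bool) (t : {set T * rule}) (W : {set T}) : T -> bool :=
  fun u => if (u, Candidacy) \in t then true
           else if (u, Withdrawal) \in t then ~~ (u \in W) && s u
           else s u.

Definition beta (s : T -> bool) : {set T} :=
  [set u | s u && [forall v, e u v ==> ~~ s v]].

Definition candidate_set (s : T -> bool) (X : {set T}) : bool :=
  [forall u in X, s u && [forall v, (e u v && s v) ==> (v \in X)]].

Definition induced_connected (X : {set T}) : bool :=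
  [forall u in X, forall v in X,
     connect (fun a b => [&& e a b, a \in X & b \in X]) u v].

Definition connected_candidate_set (s : T -> bool) (X : {set T}) : bool :=
  candidate_set s X && induced_connected X.

Definition alive (s : T -> bool) (X : {set T}) : bool :=
  [exists u in X, enabled s u Withdrawal].

Definition vanishes (s' : T -> bool) (X : {set T}) : bool :=
  [forall u in X, ~~ s' u || (u \in beta s')].

(* Probability of an event E (on the final configuration) when executing t
   from s: each withdrawing node independently switches to bot w.p. 1/2. *)
Definition exec_prob (s : T -> bool) (t : {set T * rule})
    (E : (T -> bool) -> bool) : rat :=
  let Tw := withdrawing_nodes t in
  (\sum_(W : {set T} | (W \subset Tw) && E (exec s t W))
     (1/2 : rat) ^+ #|W| * (1/2 : rat) ^+ #|Tw :\: W|)%R.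

End Alg.

(* Main.v *)
Require Import Defs.
From mathcomp Require Import all_boot all_order all_algebra.
Import Order.TTheory GRing.Theory Num.Theory.
From mathcomp Require Import lra zify.
Local Open Scope ring_scope.

Lemma ep_count (T : finType) (s : T -> bool) (t : {set T * rule})
  (P : (T -> bool) -> bool) :
  exec_prob s t P = ((1/2 : rat) ^+ #|withdrawing_nodes t|) *+
     #|[set W : {set T} | (W \subset withdrawing_nodes t) && P (exec s t W)]|.
Proof.
rewrite /exec_prob.
rewrite (eq_bigr (fun _ => (1/2 : rat) ^+ #|withdrawing_nodes t|)); last first.
  move=> W /andP[sub _]; rewrite -exprD cardsDS // subnKC //.
  exact: subset_leq_card.
rewrite -sumr_const; apply: eq_bigl => W; by rewrite inE.
Qed.

Theorem mainTheorem15 (T : finType) (e : rel T) (s : T -> bool)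
    (X : {set T}) (t : {set T * rule}) :
  simple_graph e ->
  connected_candidate_set e s X ->
  alive e s X ->
  valid_moves e s t ->
  (forall m, m \in t -> m.2 = Withdrawal /\ m.1 \in X) ->
  (0 < exec_prob s t (fun s' => vanishes e s' X))%R ->
  (2 / 3 <=
     exec_prob s t (fun s' => vanishes e s' X && (beta e s' :\: beta e s != set0))
     / exec_prob s t (fun s' => vanishes e s' X) :> rat)%R.
Proof.
move=> [esym eirr] /andP[hcand hconn] halive _ ht hpos.
set Tw := withdrawing_nodes t.
have hTwX : Tw \subset X.
  apply/subsetP => u; rewrite inE => /ht [_]; done.
have hC : forall u, (u, Candidacy) \notin t.
  by move=> u; apply/negP => /ht [].
have hexec : forall W : {set T}, W \subset Tw -> forall u, exec s t W u = (u \notin W) && s u.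
  move=> W sub u; rewrite /exec (negbTE (hC u)).
  case: ifP => // hu.
  have -> : u \notin W by apply/negP => /(subsetP sub); rewrite inE hu.
  done.
have candX : forall u v, u \in X -> e u v -> s v -> v \in X.
  move=> u v uX euv sv; move/forallP: hcand => /(_ u); rewrite uX /= => /andP[_].
  by move/forallP => /(_ v); rewrite euv sv.
have sX : forall u, u \in X -> s u.
  by move=> u uX; move/forallP: hcand => /(_ u); rewrite uX => /andP[].
case/existsP: halive => u /andP[uX] /= /andP[su] /existsP[v /andP[euv sv]].
have vX := candX _ _ uX euv sv.
have uv : u != v by apply/eqP => E; move: euv; rewrite E eirr.
have hnb : forall x, x \in X -> exists y, e x y && s y.
  move=> x xX.
  case: (eqVneq x u) => [->|xu]; first by exists v; rewrite euv sv.
  move/forallP: hconn => /(_ x); rewrite xX /= => /forallP /(_ u); rewrite uX /=.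
  case/connectP => [[|y p]] /=; first by move=> _ E; move: xu; rewrite E eqxx.
  case/andP => /and3P[exy _ yX] _ _; exists y; by rewrite exy sX.
(* vanishing with a surviving node gives E *)
have hE : forall W : {set T}, W \subset Tw -> W != X ->
   vanishes e (exec s t W) X -> beta e (exec s t W) :\: beta e s != set0.
  move=> W sub WX hv.
  have [x xX xW] : exists2 x, x \in X & x \notin W.
    apply/exists_inP; apply: contraR WX => /exists_inPn H.
    rewrite eqEsubset (subset_trans sub hTwX) /=.
    apply/subsetP => x xX; have := H x xX; by rewrite negbK.
  have hb : x \in beta e (exec s t W).
    by move/forallP: hv => /(_ x); rewrite xX /= hexec // xW sX.
  apply/set0Pn; exists x; rewrite inE hb andbT inE.
  case: (hnb x xX) => y /andP[exy sy].
  rewrite sX //=; apply/negP => /forallP /(_ y); by rewrite exy sy.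
have hV : forall x, x \in X -> X \subset Tw ->
   vanishes e (exec s t (X :\ x)) X && (beta e (exec s t (X :\ x)) :\: beta e s != set0).
  move=> x xX XTw.
  have sub : X :\ x \subset Tw by apply: subset_trans XTw; apply: subsetDl.
  have hvx : vanishes e (exec s t (X :\ x)) X.
    apply/forallP => y; apply/implyP => yX.
    rewrite hexec // !inE yX andbT.
    case: (eqVneq y x) => [->|yx] //=.
    rewrite sX //= hexec // !inE eqxx /= sX //=; apply/forallP => z; apply/implyP => exz.
    rewrite hexec // !inE negb_and negbK.
    case: (eqVneq z x) => [E|zx] /=; first by move: exz; rewrite E eirr.
    by case sz: (s z); rewrite ?orbT // (candX _ _ xX exz sz).
  rewrite hvx /=; apply: hE => //.
  by apply/eqP => E; move: xX; rewrite -{1}E !inE eqxx.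
rewrite !ep_count.
set A := [set W | _ && vanishes e _ X].
set B := [set W | _ && (vanishes e _ X && _)].
set c := (1/2 : rat) ^+ #|Tw|.
have cpos : (0 < c)%R by rewrite exprn_gt0.
have hA : forall W : {set T}, W \in A -> W != X -> W \in B.
  move=> W; rewrite !inE => /andP[sub hv] WX; by rewrite sub hv hE.
suff : (2 * #|A| <= 3 * #|B|)%N.
  move: hpos; rewrite ep_count -/c -/A => hpos le.
  have Apos : (0 < #|A|%:R :> rat)%R.
    rewrite ltr0n; move: hpos; case: #|A| => //; by rewrite mulr0n ltxx.
  rewrite -[c *+ #|A|]mulr_natr -[c *+ #|B|]mulr_natr -mulf_div divff ?gt_eqF // mul1r.
  rewrite ler_pdivlMr //; have : ((2 * #|A|)%:R <= (3 * #|B|)%:R :> rat)%R by rewrite ler_nat.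
  rewrite !natrM; lra.
case: (boolP (X \subset Tw)) => XTw; last first.
  have : A \subset B.
    apply/subsetP => W WA; apply: hA => //; apply: contra XTw => /eqP <-.
    by move: WA; rewrite inE => /andP[].
  move/subset_leq_card; lia.
have Bge : (2 <= #|B|)%N.
  have : [set X :\ u; X :\ v] \subset B.
    apply/subsetP => W; rewrite !inE => /orP[] /eqP ->; rewrite hV // andbT;
    apply: subset_trans XTw; apply: subsetDl.
  move/subset_leq_card; rewrite cards2.
  suff -> : X :\ u != X :\ v by [].
  apply/eqP => E; have : u \in X :\ v by rewrite !inE uv.
  by rewrite -E !inE eqxx.
have : A \subset B :|: [set X].
  apply/subsetP => W WA; rewrite in_setU; case: (eqVneq W X) => [->|WX]; first by rewrite set11 orbT.
  by rewrite hA.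
move/subset_leq_card; rewrite setUC cardsU1. move: Bge; case: (X \notin B); move: #|A| #|B| => a b /=; clear; lia. Qed.
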